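(* Let $n\in\mathbb{N}$ and let $E$ be a normed space over $\mathbb{K}\in\{\mathbb{R},\mathbb{C}\}$ of infinite (algebraic) dimension $\lambda$. Then each of the following sets is $2^\lambda$-lineable: (i) the set of unbounded $n$-linear forms $E^n\to\mathbb{K}$; (ii) the set of unbounded symmetric $n$-linear forms $E^n\to\mathbb{K}$; (iii) the set of unbounded $n$-homogeneous polynomials $E\to\mathbb{K}$; (iv) the set of unbounded polynomials $E\to\mathbb{K}$ of degree at most $n$.
   Context: ''Unbounded'' means not bounded on the closed unit ball of $E$ (for an $n$-linear form $L$: $\sup\{|L(x_1,\ldots,x_n)|:\|x_i\|\le1\}=\infty$). A map $P:E\to\mathbb{K}$ is an $n$-homogeneous polynomial if $P(x)=L(x,\ldots,x)$ for some symmetric $n$-linear (not necessarily continuous) $L:E^n\to\mathbb{K}$; a polynomial of degree at most $n$ is a sum $P_0+P_1+\cdots+P_n$ with $P_0$ constant and $P_k$ $k$-homogeneous. For a cardinal $\mu$, a set $M$ of functions is $\mu$-lineable if $M\cup\{0\}$ contains a vector space of dimension $\mu$. *)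

(* Defs.v *)
From mathcomp Require Import all_boot all_algebra.
From mathcomp Require Import complex perm fingroup.
From mathcomp Require Import all_classical all_reals normedtype.
From Stdlib Require List.
Set Implicit Arguments. Unset Strict Implicit. Unset Printing Implicit Defensive.
Import GRing.Theory Num.Theory.
Local Open Scope ring_scope.

Section Defs.
Variable K : numFieldType.

Definition lin_indep (V : lmodType K) (I : Type) (f : I -> V) : Prop :=
  forall (s : seq I) (c : I -> K), List.NoDup s ->
    \sum_(i <- s) c i *: f i = 0 -> forall i, List.In i s -> c i = 0.

Definition spans (V : lmodType K) (I : Type) (f : I -> V) : Prop :=
  forall v : V, exists (s : seq I) (c : I -> K), v = \sum_(i <- s) c i *: f i.

Definition hamel_basis (V : lmodType K) (I : Type) (f : I -> V) : Prop :=
  lin_indep f /\ spans f.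

Definition fun_lin_indep (X J : Type) (f : J -> (X -> K)) : Prop :=
  forall (s : seq J) (c : J -> K), List.NoDup s ->
    (forall x, \sum_(j <- s) c j * f j x = 0) -> forall j, List.In j s -> c j = 0.

(** [M] is lineable "with dimension #|J|": M ∪ {0} contains a vector space of
    dimension #|J|, i.e. the span of a linearly independent family indexed by J. *)
Definition lineable_idx (X J : Type) (M : (X -> K) -> Prop) : Prop :=
  exists f : J -> (X -> K), fun_lin_indep f /\
    forall (s : seq J) (c : J -> K),
      let g := fun x => \sum_(j <- s) c j * f j x in
      (forall x, g x = 0) \/ M g.

Variable E : normedModType K.

Definition upd n (x : 'I_n -> E) (i : 'I_n) (y : E) : 'I_n -> E :=
  fun j => if j == i then y else x j.

Definition multilinear n (L : ('I_n -> E) -> K) : Prop :=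
  forall (i : 'I_n) (x : 'I_n -> E) (a : K) (u v : E),
    L (upd x i (a *: u + v)) = a * L (upd x i u) + L (upd x i v).

Definition symmetric_form n (L : ('I_n -> E) -> K) : Prop :=
  forall (s : {perm 'I_n}) (x : 'I_n -> E), L (fun j => x (s j)) = L x.

Definition unbounded_form n (L : ('I_n -> E) -> K) : Prop :=
  forall M : nat, exists x : 'I_n -> E,
    (forall i, `|x i| <= 1) /\ M%:R < `|L x|.

Definition unbounded_fun (P : E -> K) : Prop :=
  forall M : nat, exists x : E, `|x| <= 1 /\ M%:R < `|P x|.

Definition homogeneous_poly n (P : E -> K) : Prop :=
  exists L : ('I_n -> E) -> K,
    multilinear L /\ symmetric_form L /\ forall x, P x = L (fun _ => x).

Definition poly_deg_le n (P : E -> K) : Prop :=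
  exists (c : K) (Q : nat -> E -> K),
    (forall k, (1 <= k <= n)%N -> homogeneous_poly k (Q k)) /\
    forall x, P x = c + \sum_(1 <= k < n.+1) Q k x.

End Defs.

(** The statement of Theorem 3.3 for a given scalar field K. The dimension
    lambda of E is #|I| for a Hamel basis b : I -> E; 2^lambda = #|set I|. *)
Definition theorem3p3_for (K : numFieldType) : Prop :=
  forall (n : nat) (E : normedModType K) (I : Type) (b : I -> E),
    (0 < n)%N -> hamel_basis b -> infinite_set [set: I] ->
    [/\ lineable_idx (set I)
          (fun L : ('I_n -> E) -> K => multilinear L /\ unbounded_form L),
        lineable_idx (set I)
          (fun L : ('I_n -> E) -> K =>
             multilinear L /\ symmetric_form L /\ unbounded_form L),
        lineable_idx (set I)
          (fun P : E -> K => homogeneous_poly n P /\ unbounded_fun P)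
      & lineable_idx (set I)
          (fun P : E -> K => poly_deg_le n P /\ unbounded_fun P)].

(* Main.v *)
Require Import Defs.
From mathcomp Require Import all_boot all_algebra.
From mathcomp Require Import complex perm fingroup.
From mathcomp Require Import all_classical all_reals normedtype.
From Stdlib Require List.
From mathcomp Require Import ring order.
Set Implicit Arguments. Unset Strict Implicit. Unset Printing Implicit Defensive.
Import Order.TTheory GRing.Theory Num.Theory.
Local Open Scope classical_set_scope.
Local Open Scope ring_scope.

Lemma nat_inj_of_infinite (I : Type) : infinite_set [set: I] ->
  exists f : nat -> I, injective f.
Proof.
move=> /infiniteP /card_leP [f].
exists (fun n => val (f (@SigSub _ _ [set: nat] n (in_setT n)))).
move=> m n /val_inj H.
have := @inj _ _ _ f _ _ (in_setT _) (in_setT _) H.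

by move=> /(congr1 val).
Qed.

Definition injon (T U : Type) (X : set T) (Y : set U) (f : T -> U) :=
  (forall x, X x -> Y (f x)) /\ (forall x y, X x -> X y -> f x = f y -> x = y).

Lemma comparability (T : Type) (t0 : T) (X Y : set T) :
  (exists f, injon X Y f) \/ (exists g, injon Y X g).
Proof.
pose P := fun G : set (T * T) =>
  [/\ (forall p, G p -> X p.1 /\ Y p.2),
      (forall x y y', G (x, y) -> G (x, y') -> y = y') &
      (forall x x' y, G (x, y) -> G (x', y) -> x = x')].
have [G [[GXY Gf Gi] Gmax]] : exists A, P A /\ forall B, A `<` B -> ~ P B.
  apply: Zorn_bigcup => F FP Ftot; split.
  - by move=> p [G /FP [+ _ _] Gp] => /(_ p Gp).
  - move=> x y y' [G1 F1 G1p] [G2 F2 G2p].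
    have [/(_ _ G1p) H|/(_ _ G2p) H] := Ftot _ _ F1 F2.
    + by have [_ Hf _] := FP _ F2; exact: Hf H G2p.
    + by have [_ Hf _] := FP _ F1; exact: Hf G1p H.
  - move=> x x' y [G1 F1 G1p] [G2 F2 G2p].
    have [/(_ _ G1p) H|/(_ _ G2p) H] := Ftot _ _ F1 F2.
    + by have [_ _ Hf] := FP _ F2; exact: Hf H G2p.
    + by have [_ _ Hf] := FP _ F1; exact: Hf G1p H.
case: (pselect (forall x, X x -> exists y, G (x, y))) => [allX|/existsNP [x /not_implyP [Xx nx]]].
  left.
  exists (fun x => if pselect (exists y, G (x, y)) is left H then projT1 (cid H) else t0).
  have fP x : X x -> G (x, if pselect (exists y, G (x, y)) is left H then projT1 (cid H) else t0).
    move=> Xx; case: pselect => [H|]; last by move: (allX _ Xx).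
    exact: projT2 (cid H).
  split=> [x Xx|x y Xx Xy E]; first exact: (GXY _ (fP _ Xx)).2.
  by apply: (Gi _ _ _ (fP _ Xx)); rewrite E; apply: fP.
case: (pselect (forall y, Y y -> exists x, G (x, y))) => [allY|/existsNP [y /not_implyP [Yy ny]]].
  right.
  exists (fun y => if pselect (exists x, G (x, y)) is left H then projT1 (cid H) else t0).
  have fP y : Y y -> G (if pselect (exists x, G (x, y)) is left H then projT1 (cid H) else t0, y).
    move=> Yy; case: pselect => [H|]; last by move: (allY _ Yy).
    exact: projT2 (cid H).
  split=> [y Yy|y y' Yy Yy' E]; first exact: (GXY _ (fP _ Yy)).1.
  by apply: (Gf _ _ _ (fP _ Yy)); rewrite E; apply: fP.
exfalso; apply: (Gmax (G `|` [set (x, y)])).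
  split; first by move=> p Gp; left.
  move=> /(_ (x, y)) H; have := H (or_intror erefl).
  by move=> Gxy; apply: nx; exists y.
split.
- by move=> p [/GXY//|->].
- move=> a b b' [Gab|[Ea Eb]] [Gab'|[Ea' Eb']]; subst.
  + exact: Gf Gab Gab'.
  + by exfalso; apply: nx; exists b.
  + by exfalso; apply: nx; exists b'.
  + by [].
- move=> a a' c [Gac|[Ea Eb]] [Gac'|[Ea' Eb']]; subst.
  + exact: Gi Gac Gac'.
  + by exfalso; apply: ny; exists a.
  + by exfalso; apply: ny; exists a'.
  + by [].
Qed.

Definition allin (T : Type) (A : set T) (s : seq T) := forall x, List.In x s -> A x.

Lemma allin_cons (T : Type) (A : set T) x s : allin A (x :: s) <-> A x /\ allin A s.
Proof.
split=> [H|[Ax As] y /= [E|ys]]; last exact: As.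
- split=> [|y ys]; first exact: (H x (or_introl erefl)).
  exact: (H y (or_intror ys)).
- by rewrite -E.
Qed.

Lemma allin_sub (T : Type) (A B : set T) s : (forall x, A x -> B x) -> allin A s -> allin B s.
Proof. by move=> AB As x xs; apply/AB/As. Qed.

Lemma allin_map (T U : Type) (A : set T) (B : set U) (u : T -> U) s :
  (forall x, A x -> B (u x)) -> allin A s -> allin B (map u s).
Proof.
move=> uAB; elim: s => [|x s IH]; first by move=> _ y [].
move=> /allin_cons [Ax As] /=.
by apply/allin_cons; split; [apply: uAB|apply: IH].
Qed.

Lemma map_inj_on (T U : Type) (C : set T) (u : T -> U) s s' :
  (forall x y, C x -> C y -> u x = u y -> x = y) ->
  allin C s -> allin C s' -> map u s = map u s' -> s = s'.
Proof.
move=> uI; elim: s s' => [|x s IH] [|x' s'] //.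
move=> /allin_cons [Cx Cs] /allin_cons [Cx' Cs'] /= [E1 E2].
by rewrite (uI _ _ Cx Cx' E1) (IH _ Cs Cs' E2).
Qed.

Lemma seq_inj_of_infinite (I : Type) : infinite_set [set: I] ->
  exists F : seq I -> I, injective F.
Proof.
move=> /nat_inj_of_infinite [io ioI].
pose dom (G : set (seq I * I)) s := exists y, G (s, y).
pose D (G : set (seq I * I)) x := dom G [:: x].
pose Q (G : set (seq I * I)) :=
  [/\ (forall s y y', G (s, y) -> G (s, y') -> y = y'),
      (forall s s' y, G (s, y) -> G (s', y) -> s = s'),
      (forall s, dom G s <-> allin (D G) s) &
      (forall s y, G (s, y) -> D G y)].
pose P G := G = set0 \/ Q G.
pose G0 := [set p | exists t : seq nat, p = (map io t, io (pickle t))].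
have QG0 : Q G0.
  have DG0 x : D G0 x <-> exists n, x = io n.
    split=> [[y [t [E _]]]|[n ->]]; last by exists (io (pickle [:: n])), [:: n].
    by case: t E => [|n [|]] //= [->]; exists n.
  split.
  - by move=> s y y' [t [-> ->]] [t' [/inj_map E ->]]; rewrite (E ioI).
  - by move=> s s' y [t [-> ->]] [t' [-> /ioI /(pcan_inj pickleK_inv) ->]].
  - move=> s; split=> [[y [t [-> _]]]|].
      by apply: (allin_map (A := setT)) => // n _; apply/DG0; exists n.
    elim: s => [|x s IH]; first by exists (io (pickle ([::] : seq nat))), [::].
    move=> /allin_cons [/DG0 [n ->] /IH [y [t [-> _]]]].
    by exists (io (pickle (n :: t))), (n :: t).
  - by move=> s y [t [_ ->]]; apply/DG0; exists (pickle t).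
have [M [PM Mmax]] : exists A, P A /\ forall B, A `<` B -> ~ P B.
  apply: Zorn_bigcup => F FP Ftot.
  have [U0|] := pselect (\bigcup_(X in F) X = set0); first by left.
  move=> /eqP /set0P [p0 [G00 FG00 G00p]]; right.
  have memQ G p : F G -> G p -> Q G.
    move=> FG Gp; case: (FP _ FG) => // G0e.
    by move: Gp; rewrite G0e.
  have Dmono G G' x : G `<=` G' -> D G x -> D G' x.
    by move=> GG' [y Gy]; exists y; apply: GG'.
  split.
  - move=> s y y' [G1 F1 G1p] [G2 F2 G2p].
    have [/(_ _ G1p) H|/(_ _ G2p) H] := Ftot _ _ F1 F2.
    + by have [Hf _ _ _] := memQ _ _ F2 G2p; exact: Hf H G2p.
    + by have [Hf _ _ _] := memQ _ _ F1 G1p; exact: Hf G1p H.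
  - move=> s s' y [G1 F1 G1p] [G2 F2 G2p].
    have [/(_ _ G1p) H|/(_ _ G2p) H] := Ftot _ _ F1 F2.
    + by have [_ Hf _ _] := memQ _ _ F2 G2p; exact: Hf H G2p.
    + by have [_ Hf _ _] := memQ _ _ F1 G1p; exact: Hf G1p H.
  - move=> s; split.
      move=> [y [G1 F1 G1p]]; have [_ _ Hd _] := memQ _ _ F1 G1p.
      have /Hd : dom G1 s by exists y.
      apply: allin_sub => x; apply: Dmono => q Gq; by exists G1.
    suff : allin (D (\bigcup_(X in F) X)) s ->
        exists G, [/\ F G, (exists p, G p) & allin (D G) s].
      move=> H /H [G [FG [p Gp] Gs]]; have [_ _ Hd _] := memQ _ _ FG Gp.
      by have [y Gy] := (Hd s).2 Gs; exists y, G.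
    elim: s => [|x s IH]; first by move=> _; exists G00; split=> //; exists p0.
    move=> /allin_cons [[y [G1 F1 G1p]] /IH [G2 [F2 [p2 G2p] G2s]]].
    have [H|H] := Ftot _ _ F1 F2.
    + exists G2; split => //; first by exists p2.
      by apply/allin_cons; split=> //; apply: (Dmono G1) => //; exists y.
    + exists G1; split => //; first by exists ([:: x], y).
      apply/allin_cons; split; first by exists y.
      by apply: allin_sub G2s => z; apply: Dmono.
  - move=> s y [G1 F1 G1p]; have [_ _ _ Hr] := memQ _ _ F1 G1p.
    by apply: (Dmono G1) (Hr _ _ G1p) => q Gq; exists G1.
have {PM} [Mf Mi Mdom Mran] : Q M.
  case: PM => // M0; exfalso; apply: (Mmax G0); last by right.
  rewrite M0; split => // /(_ (map io [::], io (pickle ([::] : seq nat)))) H.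
  by have := H (ex_intro _ [::] erefl).
pose A := D M.
pose f0 s := if pselect (dom M s) is left H then projT1 (cid H) else io 0.
have f0P s : allin A s -> M (s, f0 s).
  move=> /Mdom Hs; rewrite /f0; case: pselect => [H|//].
  exact: projT2 (cid H).
have f0A s : allin A s -> A (f0 s) by move=> /f0P /Mran.
have f0I s s' : allin A s -> allin A s' -> f0 s = f0 s' -> s = s'.
  by move=> /f0P Ms /f0P Ms' E; apply: Mi Ms _; rewrite E.
have [a0 Aa0] : exists a, A a.
  by have [y My] := (Mdom [::]).2 (fun x (H : List.In x [::]) => match H with end); exists y; apply: Mran My.
have [[g [gA gI]]|[h [hA hI]]] := comparability (io 0) A (~` A); last first.
  pose u x := if pselect (A x) is left _ then f0 [:: x] else f0 [:: h x; h x].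
  have uA x : A (u x).
    rewrite /u; case: pselect => Ax; apply: f0A.
      by apply/allin_cons; split=> // y [].
    by apply/allin_cons; split; [apply: hA|apply/allin_cons; split=> [|y []]; apply: hA].
  have A1 x : A x -> allin A [:: x] by move=> Ax; apply/allin_cons; split=> // z [].
  have A2 x : ~ A x -> allin A [:: h x; h x].
    move=> Ax; apply/allin_cons; split; first exact: hA.
    by apply/allin_cons; split=> [|z []]; apply: hA.
  have uI x y : u x = u y -> x = y.
    rewrite /u; case: pselect => Ax; case: pselect => Ay E.
    - by case: (f0I _ _ (A1 _ Ax) (A1 _ Ay) E).
    - by have := f0I _ _ (A1 _ Ax) (A2 _ Ay) E.
    - by have := f0I _ _ (A2 _ Ax) (A1 _ Ay) E.
    - by case: (f0I _ _ (A2 _ Ax) (A2 _ Ay) E) => E' _; exact: hI Ax Ay E'.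
  exists (fun s => f0 (map u s)) => s s' E.
  apply: (map_inj_on (C := setT)) => //; first by move=> x y _ _; apply: uI.
  by apply: f0I E; apply: (allin_map (A := setT)) => // x _; apply: uA.
exfalso.
pose B x := exists a, A a /\ g a = x.
pose ginv x := if pselect (B x) is left H then projT1 (cid H) else io 0.
have ginvP x : B x -> A (ginv x) /\ g (ginv x) = x.
  rewrite /ginv; case: pselect => [H _|//]; exact: projT2 (cid H).
have BnA x : B x -> ~ A x by move=> [a [Aa <-]]; apply: gA.
pose enc x := if pselect (A x) is left _ then [:: x] else [:: ginv x; ginv x].
have encA x : A x \/ B x -> allin A (enc x).
  rewrite /enc; case: pselect => Ax; first by move=> _; apply/allin_cons; split=> // z [].
  case=> // /ginvP [gA' _].
  by apply/allin_cons; split=> //; apply/allin_cons; split=> // z [].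
have encI x y : A x \/ B x -> A y \/ B y -> enc x = enc y -> x = y.
  rewrite /enc; case: pselect => Ax; case: pselect => Ay.
  - by move=> _ _ [->].
  - by move=> _ _ [].
  - by move=> _ _ [].
  - move=> [//|Bx] [//|By] [E _].
    by rewrite -(ginvP _ Bx).2 -(ginvP _ By).2 E.
pose u x := f0 (enc x).
have uA x : A x \/ B x -> A (u x) by move=> /encA /f0A.
have uI x y : A x \/ B x -> A y \/ B y -> u x = u y -> x = y.
  move=> Hx Hy /f0I E; apply: encI => //; apply: E; exact: encA.
pose Phi s := f0 (map u s).
have mapA s0 : allin (A `|` B) s0 -> allin A (map u s0).
  by apply: allin_map => x Hx; apply: uA.
have PhiA s : allin (A `|` B) s -> A (Phi s).
  by move=> Hs; apply: f0A; apply: mapA.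
have PhiI s s' : allin (A `|` B) s -> allin (A `|` B) s' -> Phi s = Phi s' -> s = s'.
  move=> Hs Hs' E; apply: (map_inj_on (C := A `|` B) _ Hs Hs').
    by move=> x y; apply: uI.
  by apply: f0I E; apply: mapA.
pose N := [set p : seq I * I | [/\ allin (A `|` B) p.1, ~ allin A p.1 & p.2 = g (Phi p.1)]].
pose M' := M `|` N.
have domM' s : dom M' s <-> allin (A `|` B) s.
  split.
    move=> [y [/(ex_intro _ y)/Mdom|[]//]].
    by apply: allin_sub => x Ax; left.
  move=> Hs; have [As|nAs] := pselect (allin A s).
    by have [y My] := (Mdom s).2 As; exists y; left.
  by exists (g (Phi s)); right.
have DM' x : D M' x <-> (A `|` B) x.
  rewrite /D domM'; split; first by move=> /(_ x (or_introl erefl)).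
  by move=> H; apply/allin_cons; split=> // z [].
have QM' : Q M'.
  split.
  - move=> s y y' [My|[_ nAs Ey]] [My'|[_ nAs' Ey']].
    + exact: Mf My My'.
    + by exfalso; apply: nAs'; apply/Mdom; exists y.
    + by exfalso; apply: nAs; apply/Mdom; exists y'.
    + by move: Ey Ey' => /= -> ->.
  - move=> s s' y [My|[Hs nAs Ey]] [My'|[Hs' nAs' Ey']].
    + exact: Mi My My'.
    + by exfalso; apply: (gA _ (PhiA _ Hs')); move: Ey' => /= <-; apply: Mran My.
    + by exfalso; apply: (gA _ (PhiA _ Hs)); move: Ey => /= <-; apply: Mran My'.
    + apply: PhiI => //; apply: gI; try exact: PhiA.
      by move: Ey Ey' => /= <- <-.
  - move=> s; rewrite domM'; split; apply: allin_sub => x; by move/DM'.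
  - move=> s y [My|[Hs _ Ey]]; apply/DM'; first by left; apply: Mran My.
    simpl in Ey; right; exists (Phi s); split; [exact: PhiA | by rewrite Ey].
apply: (Mmax M'); last by right.
split; first by move=> p Mp; left.
move=> /(_ ([:: g a0], g (Phi [:: g a0]))) H.
have Ba : B (g a0) by exists a0.
have : M ([:: g a0], g (Phi [:: g a0])).
  apply: H; right; split => //=.
  - by apply/allin_cons; split=> [|z []]; right.
  - by move=> /(_ (g a0) (or_introl erefl)); exact: gA Aa0.
move=> /(ex_intro (fun y => M ([:: g a0], y))) /Mdom /(_ (g a0) (or_introl erefl)).
exact: gA.
Qed.
Lemma big_pred1_uniq (R : zmodType) (T : eqType) (u : seq T) (x : T) (F : T -> R) :
  uniq u -> x \in u -> \sum_(i <- u | x == i) F i = F x.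
Proof.
elim: u => [|y u IH] //= /andP [yu uu]; rewrite inE big_cons.
case: eqP => [exy _|nxy /= xu]; last by rewrite IH.
subst y; rewrite big1_seq ?addr0 // => i /andP [/eqP exi iu].
by subst i; rewrite iu in yu.
Qed.

Lemma uniq_NoDup (T : eqType) (s : seq T) : uniq s -> List.NoDup s.
Proof.
elim: s => [|x s IH] /=; first by constructor.
move=> /andP [xs us]; constructor; last exact: IH.
move=> xin; move/negP: xs; apply; elim: s xin {IH us} => [|y s IH] //= [->|/IH]; rewrite inE ?eqxx //.
by move=> ->; rewrite orbT.
Qed.

Lemma In_mem (T : eqType) (s : seq T) x : List.In x s -> x \in s.
Proof. by elim: s => [|y s IH] //= [->|/IH]; rewrite inE ?eqxx // => ->; rewrite orbT. Qed.

Section Regroup.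
Variables (K : numFieldType) (V : lmodType K) (T : eqType) (X : Type).

Lemma regroup (io : X -> T) (al : X -> K) (w : T -> V) (u : seq T) (r : seq X) :
  uniq u -> (forall k, List.In k r -> io k \in u) ->
  \sum_(k <- r) al k *: w (io k) =
  \sum_(i <- u) (\sum_(k <- r | io k == i) al k) *: w i.
Proof.
move=> uu; elim: r => [|x r IH] ru.
  by rewrite big_nil big1 // => i _; rewrite big_nil scale0r.
rewrite big_cons IH; last by move=> k kr; apply: ru; right.
have xu : io x \in u by apply: ru; left.
transitivity (\sum_(i <- u) ((if io x == i then al x else 0) *: w i +
    (\sum_(k <- r | io k == i) al k) *: w i)); last first.
  by apply: eq_bigr => i _; rewrite big_cons -scalerDl; case: (io x == i); rewrite ?add0r.
rewrite big_split /=; congr (_ + _).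
rewrite -(big_pred1_uniq (fun i => al x *: w i) uu xu) big_mkcond /=.
by apply: eq_bigr => i _; case: (io x == i); rewrite ?scale0r.
Qed.

Lemma In_map_mem (io : X -> T) (r : seq X) k : List.In k r -> io k \in map io r.
Proof. by elim: r => [|x r IH] //= [->|/IH]; rewrite inE ?eqxx // => ->; rewrite orbT. Qed.
End Regroup.

Lemma mem_In (T : eqType) (s : seq T) x : x \in s -> List.In x s.
Proof. by elim: s => [|y s IH] //=; rewrite inE => /orP [/eqP ->|/IH]; [left|right]. Qed.

Section Hamel.
Variables (K : numFieldType) (E : normedModType K) (I : Type) (b : I -> E).
Hypothesis hb : hamel_basis b.

Lemma zero_comb (X : Type) (io : X -> I) (al : X -> K) (r : seq X) :
  \sum_(k <- r) al k *: b (io k) = 0 ->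
  forall g : I -> K, \sum_(k <- r) al k * g (io k) = 0.
Proof.
move=> H g.
pose u := undup (map (io : X -> {classic I}) r).
have uu : uniq u by apply: undup_uniq.
have ru k : List.In k r -> (io k : {classic I}) \in u.
  by move=> kr; rewrite mem_undup; apply: In_map_mem.
have E1 : \sum_(k <- r) al k * g (io k) = \sum_(k <- r) al k *: (g (io k) : K^o) by [].
rewrite E1 (@regroup K K^o {classic I} X io al g u r uu ru).
rewrite (@regroup K E {classic I} X io al b u r uu ru) in H.
rewrite big1_seq // => i /andP [_ iu].
by rewrite (hb.1 u _ (uniq_NoDup uu) H i (mem_In iu)) scale0r.
Qed.

Definition rs (v : E) : seq I := projT1 (cid (hb.2 v)).
Definition rc (v : E) : I -> K := projT1 (cid (projT2 (cid (hb.2 v)))).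
Lemma repP v : v = \sum_(i <- rs v) rc v i *: b i.
Proof. exact: (projT2 (cid (projT2 (cid (hb.2 v))))). Qed.

Definition Phi (h : I -> K) (v : E) : K := \sum_(i <- rs v) rc v i * h i.

Lemma Phi_eq (X : Type) (io : X -> I) (al : X -> K) (r : seq X) v h :
  \sum_(k <- r) al k *: b (io k) = v -> Phi h v = \sum_(k <- r) al k * h (io k).
Proof.
move=> Hv.
pose io' (p : I + X) := match p with inl i => i | inr k => io k end.
pose al' (p : I + X) := match p with inl i => rc v i | inr k => - al k end.
pose r' := map inl (rs v) ++ map inr r.
have H0 : \sum_(p <- r') al' p *: b (io' p) = 0.
  rewrite big_cat !big_map /=.
  under [X in _ + X]eq_bigr do rewrite scaleNr.
  by rewrite sumrN Hv -repP subrr.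
have := zero_comb H0 h; rewrite big_cat !big_map /=.
under [X in _ + X = _]eq_bigr do rewrite mulNr.
by rewrite sumrN => /subr0_eq.
Qed.

Lemma Phi_lin h a u v : Phi h (a *: u + v) = a * Phi h u + Phi h v.
Proof.
pose io (p : I + I) := match p with inl i => i | inr i => i end.
pose al (p : I + I) := match p with inl i => a * rc u i | inr i => rc v i end.
rewrite (@Phi_eq _ io al (map inl (rs u) ++ map inr (rs v))).
  rewrite big_cat !big_map /= /Phi mulr_sumr; congr (_ + _).
  by apply: eq_bigr => i _; rewrite mulrA.
rewrite big_cat !big_map /= -repP [u in a *: u]repP scaler_sumr; congr (_ + _).
by apply: eq_bigr => i _; rewrite scalerA.
Qed.

Lemma Phi_b h i : Phi h (b i) = h i.
Proof.
rewrite (@Phi_eq _ id (fun _ => 1) [:: i]) ?big_seq1 ?mul1r //.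
by rewrite scale1r.
Qed.

Lemma Phi_0 h : Phi h 0 = 0.
Proof. by rewrite (@Phi_eq _ id (fun _ => 1) [::]) ?big_nil. Qed.

Lemma Phi_sum (J : Type) (s : seq J) (c : J -> K) (f : J -> I -> K) v :
  Phi (fun i => \sum_(j <- s) c j * f j i) v = \sum_(j <- s) c j * Phi (f j) v.
Proof.
rewrite /Phi; under eq_bigr do rewrite mulr_sumr.
rewrite exchange_big; apply: eq_bigr => j _; rewrite mulr_sumr.
by apply: eq_bigr => i _; rewrite mulrCA.
Qed.

Lemma Phi_zero v : Phi (fun _ => 0) v = 0.
Proof. by rewrite /Phi big1 // => i _; rewrite mulr0. Qed.

Lemma b_neq0 i : b i != 0.
Proof.
apply/eqP => bi0.
have := hb.1 [:: i] (fun _ => 1) (List.NoDup_cons i (@List.in_nil _ i) (List.NoDup_nil _)).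
rewrite big_seq1 bi0 scaler0 => /(_ erefl i (or_introl erefl)) /eqP.
by rewrite oner_eq0.
Qed.

Definition nb i := `|b i|^-1 *: b i.
Lemma norm_nb i : `|nb i| = 1.
Proof. exact: normfZV (b_neq0 i). Qed.

Definition Phi' (h : I -> K) := Phi (fun i => `|b i| * h i).

Lemma Phi'_nb h i : Phi' h (nb i) = h i.
Proof.
rewrite /Phi' /nb -[_ *: b i]addr0 Phi_lin Phi_b Phi_0 addr0 mulrA mulVf ?mul1r //.
by rewrite normr_eq0 b_neq0.
Qed.

Lemma Phi'_lin h a u v : Phi' h (a *: u + v) = a * Phi' h u + Phi' h v.
Proof. exact: Phi_lin. Qed.

Lemma Phi'_sum (J : Type) (s : seq J) (c : J -> K) (f : J -> I -> K) v :
  Phi' (fun i => \sum_(j <- s) c j * f j i) v = \sum_(j <- s) c j * Phi' (f j) v.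
Proof.
rewrite /Phi' -Phi_sum; congr Phi; apply: funext => i.
by rewrite mulr_sumr; apply: eq_bigr => j _; rewrite mulrCA.
Qed.

Lemma Phi'_zero v : Phi' (fun _ => 0) v = 0.
Proof. by rewrite /Phi' (_ : (fun i => _) = fun _ => 0) ?Phi_zero //; apply: funext => i; rewrite mulr0. Qed.

End Hamel.

Definition linf (K : numFieldType) (E : normedModType K) (F : E -> K) :=
  forall a u v, F (a *: u + v) = a * F u + F v.

Section Forms.
Variables (K : numFieldType) (E : normedModType K) (n : nat).

Lemma prod_upd (G : 'I_n -> E -> K) (x : 'I_n -> E) i y :
  \prod_k G k (upd x i y k) = G i y * \prod_(k | k != i) G k (x k).
Proof.
rewrite (bigD1 i) //= /upd eqxx; congr (_ * _).
by apply: eq_bigr => k /negbTE ->.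
Qed.

Lemma multilinear_sumprod (G : 'I_n -> 'I_n -> E -> K) :
  (forall j k, linf (G j k)) ->
  multilinear (fun x : 'I_n -> E => \sum_j \prod_k G j k (x k)).
Proof.
move=> Glin i x a u v /=.
under eq_bigr do rewrite prod_upd Glin.
under [X in _ = a * X + _]eq_bigr do rewrite prod_upd.
under [X in _ = _ + X]eq_bigr do rewrite prod_upd.
rewrite mulr_sumr -big_split /=; apply: eq_bigr => j _.
by rewrite mulrDl mulrA.
Qed.

Lemma symmetric_sumprod (G : 'I_n -> 'I_n -> E -> K) :
  (forall j k (s : {perm 'I_n}), G j ((s^-1)%g k) = G (s j) k) ->
  Defs.symmetric_form (fun x : 'I_n -> E => \sum_j \prod_k G j k (x k)).
Proof.
move=> GP s x /=.
transitivity (\sum_j \prod_k G (s j) k (x k)).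
  apply: eq_bigr => j _.
  rewrite (reindex_inj (perm_inj (s := (s^-1)%g))) /=.
  by apply: eq_bigr => k _; rewrite permKV GP.
by rewrite [RHS](reindex_inj (perm_inj (s := s))).
Qed.

End Forms.

Section Lf.
Variables (K : numFieldType) (E : normedModType K) (I : Type) (b : I -> E).
Hypothesis hb : hamel_basis b.
Variable n : nat.

Definition psi := Phi' hb (fun _ => 1).
Definition Gf (h : I -> K) (j k : 'I_n) : E -> K := if k == j then Phi' hb h else psi.
Definition Lf (h : I -> K) (x : 'I_n -> E) : K := \sum_j \prod_k Gf h j k (x k).

Lemma Lf_multi h : multilinear (Lf h).
Proof.
apply: multilinear_sumprod => j k a u v; rewrite /Gf.
by case: (k == j); apply: Phi'_lin.
Qed.

Lemma Lf_sym h : Defs.symmetric_form (Lf h).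
Proof.
apply: symmetric_sumprod => j k s; rewrite /Gf.
by rewrite -(inj_eq (perm_inj (s := s))) permKV.
Qed.

Lemma LfE h x : Lf h x = \sum_j Phi' hb h (x j) * \prod_(k | k != j) psi (x k).
Proof.
apply: eq_bigr => j _; rewrite (bigD1 j) //= /Gf eqxx; congr (_ * _).
by apply: eq_bigr => k /negbTE ->.
Qed.

Lemma Lf_diag h i : Lf h (fun _ => nb b i) = n%:R * h i.
Proof.
rewrite LfE (eq_bigr (fun _ => h i)); last first.
  move=> j _; rewrite Phi'_nb big1 ?mulr1 // => k _.
  by rewrite /psi Phi'_nb.
by rewrite sumr_const card_ord mulr_natl.
Qed.

Lemma Lf_sum (J : Type) (s : seq J) (c : J -> K) (f : J -> I -> K) x :
  Lf (fun i => \sum_(j <- s) c j * f j i) x = \sum_(j <- s) c j * Lf (f j) x.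
Proof.
rewrite LfE; under eq_bigr do rewrite Phi'_sum mulr_suml.
rewrite exchange_big /=; apply: eq_bigr => j _.
by rewrite LfE mulr_sumr; apply: eq_bigr => k _; rewrite mulrA.
Qed.

Lemma Lf_zero x : Lf (fun _ => 0) x = 0.
Proof. by rewrite LfE big1 // => j _; rewrite Phi'_zero mul0r. Qed.

End Lf.

Lemma big1_In (R : zmodType) (J : Type) (s : seq J) (f : J -> R) :
  (forall j, List.In j s -> f j = 0) -> \sum_(j <- s) f j = 0.
Proof.
elim: s => [|x s IH] H; first by rewrite big_nil.
by rewrite big_cons H ?IH ?add0r // => [j js|]; [apply: H; right|left].
Qed.

Section Family.
Variables (K : numFieldType) (I : Type).

Definition chi (A : set I) (t : seq I) : K :=
  \prod_(x <- t) (if `[< A x >] then 2 else 3).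

Lemma chi_cons A x t : chi A (x :: t) = chi A [:: x] * chi A t.
Proof. by rewrite /chi big_cons big_seq1. Qed.

Lemma artin (s : seq (set I)) (c : set I -> K) : List.NoDup s ->
  (forall t, \sum_(A <- s) c A * chi A t = 0) -> forall A, List.In A s -> c A = 0.
Proof.
elim: s c => [|A1 s IH] c nd H //.
have [nA1 nds] : ~ List.In A1 s /\ List.NoDup s by inversion nd.
have cs A : List.In A s -> c A = 0.
  move=> As.
  have [x hx] : exists x, `[< A x >] != `[< A1 x >].
    apply: contra_notP nA1 => /forallNP hall.
    suff -> : A1 = A by [].
    apply: funext => y; apply: propext; apply: asbool_eq_equiv.
    by have := hall y; move/negP/negPn/eqP.
  pose c' B := c B * (chi B [:: x] - chi A1 [:: x]).
  have H' t : \sum_(B <- s) c' B * chi B t = 0.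
    have H1 := H (x :: t); have H2 := H t.
    rewrite big_cons chi_cons in H1; rewrite big_cons in H2.
    have e1 : \sum_(B <- s) c B * chi B (x :: t) = - (c A1 * (chi A1 [:: x] * chi A1 t)).
      by apply: (addrI (c A1 * (chi A1 [:: x] * chi A1 t))); rewrite H1 subrr.
    have e2 : \sum_(B <- s) c B * chi B t = - (c A1 * chi A1 t).
      by apply: (addrI (c A1 * chi A1 t)); rewrite H2 subrr.
    transitivity (\sum_(B <- s) c B * chi B (x :: t) - chi A1 [:: x] * \sum_(B <- s) c B * chi B t).
      rewrite mulr_sumr -sumrB; apply: eq_bigr => B _; rewrite /c' [chi B (x :: t)]chi_cons; ring.
    rewrite e1 e2; ring.
  have := IH c' nds H' A As; rewrite /c' => /eqP; rewrite mulf_eq0 => /orP [/eqP //|].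
  rewrite /chi !big_seq1; move: hx.
  case: (`[< A x >]); case: (`[< A1 x >]) => //= _.
  - have -> : (2 : K) - 3 = - 1 by ring.
    by rewrite oppr_eq0 oner_eq0.
  - have -> : (3 : K) - 2 = 1 by ring.
    by rewrite oner_eq0.
move=> A [<-|]; last exact: cs.
have := H [::]; rewrite big_cons (big1_In (s := s)); last first.
  by move=> B Bs; rewrite cs ?mul0r.
by rewrite addr0 /chi big_nil mulr1.
Qed.

End Family.
Arguments chi {K I}.

Section Main.
Variables (K : numFieldType) (E : normedModType K) (I : Type) (b : I -> E).
Hypothesis hb : hamel_basis b.
Variables (n : nat) (F : seq I -> I).
Hypotheses (hn : (0 < n)%N) (FI : injective F)
  (archi : forall x : K, 0 <= x -> exists k : nat, x < k%:R).

Definition enc (p : seq I * nat) := F (F p.1 :: nseq p.2 (F p.1)).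

Lemma encI : injective enc.
Proof.
move=> [t k] [t' k'] /FI [E1 /(congr1 size)]; rewrite !size_nseq => ->.
by rewrite (FI E1).
Qed.

Definition dec (i : I) : option (seq I * nat) :=
  if pselect (exists p, i = enc p) is left H then Some (projT1 (cid H)) else None.

Lemma dec_enc p : dec (enc p) = Some p.
Proof.
rewrite /dec; case: pselect => [H|[]]; last by exists p.
by congr Some; apply: encI; rewrite -(projT2 (cid H)).
Qed.

Definition gam (A : set I) (i : I) : K :=
  match dec i with Some p => p.2%:R * chi A p.1 | None => 0 end.

Definition fam (A : set I) : ('I_n -> E) -> K := @Lf K E I b hb n (gam A).

Lemma fam_indep' : fun_lin_indep (fun A (x : E) => fam A (fun _ => x)).
Proof.
move=> s c nd H; apply: (@artin K I s c nd) => t.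
have := H (nb b (enc (t, 1%N))).
under eq_bigr do rewrite /fam Lf_diag /gam dec_enc /= mul1r mulrCA.
rewrite -mulr_sumr => /eqP; rewrite mulf_eq0 pnatr_eq0 => /orP [/eqP n0|/eqP //].
by move: hn; rewrite n0.
Qed.

Lemma fam_indep : fun_lin_indep fam.
Proof. by move=> s c nd H j js; apply: (fam_indep' nd _ js) => x /=; apply: H. Qed.

Definition Gam (s : seq (set I)) (c : set I -> K) (i : I) : K :=
  \sum_(A <- s) c A * gam A i.

Lemma fam_comb s c x : \sum_(A <- s) c A * fam A x = @Lf K E I b hb n (Gam s c) x.
Proof. by rewrite /fam /Gam Lf_sum. Qed.

Lemma Gam_cases s c :
  (forall i, Gam s c i = 0) \/ (forall M : nat, exists i, M%:R < `|Gam s c i|).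
Proof.
have [H|/existsNP [i0 Hi0]] := pselect (forall i, Gam s c i = 0); [by left|right].
have GamE i p : dec i = Some p -> Gam s c i = p.2%:R * \sum_(A <- s) c A * chi A p.1.
  move=> di; rewrite /Gam /gam di mulr_sumr; apply: eq_bigr => A _; ring.
case di0 : (dec i0) => [[t0 k0]|]; last first.
  by exfalso; apply: Hi0; rewrite /Gam /gam di0 big1_In // => A _; rewrite mulr0.
move: Hi0; rewrite (GamE _ _ di0) /= => /eqP; rewrite mulf_eq0 negb_or => /andP [_ X0].
move=> M.
have [k Hk] := archi (x := M%:R / `|\sum_(A <- s) c A * chi A t0|) (divr_ge0 (ler0n _ _) (normr_ge0 _)).
exists (enc (t0, k)); rewrite (GamE _ _ (dec_enc _)) /= normrM normr_nat.
by rewrite -ltr_pdivrMr // normr_gt0.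
Qed.

End Main.

Section Final.
Variables (K : numFieldType) (E : normedModType K) (I : Type) (b : I -> E).
Hypothesis hb : hamel_basis b.
Variables (n : nat) (F : seq I -> I).
Hypotheses (hn : (0 < n)%N) (FI : injective F)
  (archi : forall x : K, 0 <= x -> exists k : nat, x < k%:R).

Lemma Lf_unb (G : I -> K) : (forall M : nat, exists i, M%:R < `|G i|) ->
  forall M : nat, exists i, M%:R < `|@Lf K E I b hb n G (fun _ => nb b i)|.
Proof.
move=> H M; have [i Hi] := H M; exists i.
rewrite Lf_diag normrM normr_nat; apply: (lt_le_trans Hi).
by apply: ler_peMl; rewrite ?normr_ge0 // ler1n.
Qed.

Let fam' := @fam K E I b hb n F.
Let Lf' := @Lf K E I b hb n.

Lemma zero_case s c : (forall i, Gam F s c i = 0) -> forall x, Lf' (Gam F s c) x = 0.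
Proof.
move=> H x; have -> : Gam F s c = (fun _ => 0) by apply: funext.
exact: Lf_zero.
Qed.

Lemma part_forms : lineable_idx (set I)
  (fun L : ('I_n -> E) -> K => multilinear L /\ Defs.symmetric_form L /\ unbounded_form L).
Proof.
exists fam'; split; first exact: fam_indep.
move=> s c /=.
have gE : (fun x => \sum_(A <- s) c A * fam' A x) = Lf' (Gam F s c).
  by apply: funext => x; apply: fam_comb.
have [H|H] := Gam_cases FI archi s c.
  by left => x; rewrite fam_comb; apply: zero_case.
right; rewrite gE; split; first exact: Lf_multi.
split; first exact: Lf_sym.
move=> M; have [i Hi] := Lf_unb H M; exists (fun _ => nb b i); split=> //.
by move=> _; rewrite norm_nb.
Qed.

Lemma part_poly : lineable_idx (set I)
  (fun P : E -> K => homogeneous_poly n P /\ unbounded_fun P).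
Proof.
exists (fun A x => fam' A (fun _ => x)); split; first exact: fam_indep'.
move=> s c /=.
have gE : (fun x : E => \sum_(A <- s) c A * fam' A (fun _ => x)) =
    (fun x => Lf' (Gam F s c) (fun _ => x)).
  by apply: funext => x; apply: fam_comb.
have [H|H] := Gam_cases FI archi s c.
  by left => x; rewrite fam_comb; apply: zero_case.
right; rewrite gE; split.
  exists (Lf' (Gam F s c)); split; first exact: Lf_multi.
  by split; first exact: Lf_sym.
move=> M; have [i Hi] := Lf_unb H M; exists (nb b i); split=> //.
by rewrite norm_nb.
Qed.

End Final.

Lemma lineable_mono (K : numFieldType) (X J : Type) (M1 M2 : (X -> K) -> Prop) :
  (forall g, M1 g -> M2 g) -> lineable_idx J M1 -> lineable_idx J M2.
Proof.
move=> M12 [f [fi fc]]; exists f; split => // s c.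
by case: (fc s c) => H; [left|right; apply: M12].
Qed.

Lemma hom_deg (K : numFieldType) (E : normedModType K) (n : nat) (P : E -> K) :
  (0 < n)%N -> homogeneous_poly n P -> poly_deg_le n P.
Proof.
move=> hn hP; exists 0, (fun k => if k == n then P else fun _ => 0); split.
  move=> k _; case: eqP => [->//|_].
  exists (fun _ => 0); split; first by move=> *; rewrite mulr0 addr0.
  by split.
move=> x; rewrite add0r big_nat_recr //= eqxx big_nat big1 ?add0r // => k /andP [_ kn].
by rewrite ltn_eqF.
Qed.

Lemma theorem_gen (K : numFieldType)
  (archi : forall x : K, 0 <= x -> exists k : nat, x < k%:R) : theorem3p3_for K.
Proof.
move=> n E I b hn hb Iinf.
have [F FI] := seq_inj_of_infinite Iinf.
split.
- apply: (lineable_mono _ (part_forms hb hn FI archi)).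
  by move=> g [? [? ?]].
- exact (part_forms hb hn FI archi).
- exact (part_poly hb hn FI archi).
- apply: (lineable_mono _ (part_poly hb hn FI archi)).
  by move=> g [? ?]; split => //; apply: hom_deg.
Qed.

Theorem theorem3p3 (R : realType) : theorem3p3_for R /\ theorem3p3_for R[i].
Proof.
split; apply: theorem_gen.
  by move=> x x0; exists (Num.bound x); apply: archi_boundP.
move=> x x0.
have Imx := ger0_Im x0.
exists (Num.bound (complex.Re x)); rewrite -(rmorph_nat (complex.real_complex R)) complex.ltcE /= Imx eqxx /=.
apply: archi_boundP.
by move: x0; rewrite complex.lecE /= => /andP [_].
Qed.
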